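(* Let $f:[-1,1]\to\mathbb{R}$ and $\epsilon_0>0$, and let $P:[-1,1]\to\mathbb{C}$ be a polynomial with $\max_{x\in[-1,1]}|f(x)-P(x)|\le\epsilon_0$. Let $\gamma:=\max_{x\in[-1,1]}|f(x)|$ and assume $\epsilon_0\le\gamma$. Let $\ket{\psi}=\sum_{j=1}^N\psi_j\ket{j}$ with $\psi_j\in\mathbb{R}$ and $\|\ket{\psi}\|_2=1$, and define $\mathcal{N}^2:=\sum_{j=1}^N|f(\psi_j)|^2>0$ and $\mathcal{N}_1^2:=\sum_{j=1}^N|P(\psi_j)|^2$. Then (i) $\max_{x\in[-1,1]}|P(x)|\le 2\gamma$; (ii) $|\mathcal{N}-\mathcal{N}_1|\le 3\gamma\epsilon_0N/\mathcal{N}$; (iii) if moreover $\epsilon_0\le\frac{\mathcal{N}^2}{6\gamma N}$, then $\mathcal{N}_1\ge\frac12\mathcal{N}$. *)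

(* Defs.v *)
From HB Require Import structures.
From mathcomp Require Import all_boot all_order all_algebra.
From mathcomp Require Import complex.
Set Implicit Arguments. Unset Strict Implicit. Unset Printing Implicit Defensive.
Import Order.TTheory GRing.Theory Num.Theory.
Local Open Scope ring_scope.

Definition cmod (R : rcfType) (z : R[i]) : R := Normc.normc z.

Definition cpeval (R : rcfType) (P : {poly R[i]}) (x : R) : R[i] := P.[(x%:C)%C].

Definition in_m11 (R : rcfType) (x : R) : bool := (-1 <= x <= 1).

(* Main.v *)
Require Import Defs.
From HB Require Import structures.
From mathcomp Require Import all_boot all_order all_algebra.
From mathcomp Require Import complex.
From mathcomp Require Import lra.
Import Order.TTheory GRing.Theory Num.Theory.
Local Open Scope ring_scope.

Lemma cmod_ge0 {R : rcfType} (z : R[i]) : 0 <= cmod z.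
Proof. by case: z => a b; rewrite /cmod /= sqrtr_ge0. Qed.

Lemma cmod_real {R : rcfType} (x : R) : cmod ((x%:C)%C) = `|x|.
Proof. by rewrite /cmod /= expr0n /= addr0 sqrtr_sqr. Qed.

Lemma cmodD {R : rcfType} (z w : R[i]) : cmod (z + w) <= cmod z + cmod w.
Proof. exact: (@le_normcD R z w). Qed.

Lemma cmodN {R : rcfType} (z : R[i]) : cmod (- z) = cmod z.
Proof. exact: (@normcN R z). Qed.

Lemma cmod_dist {R : rcfType} (z w : R[i]) : `|cmod z - cmod w| <= cmod (z - w).
Proof.
have h1 : cmod z <= cmod (z - w) + cmod w by rewrite -{1}(subrK w z) cmodD.
have h2 : cmod w <= cmod (z - w) + cmod z.
  have := @cmodD R (w - z) z; rewrite subrK -(@cmodN R (w - z)) opprB; done.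
rewrite ler_norml; apply/andP; split; lra.
Qed.

Theorem lemma12 (R : rcfType) (f : R -> R) (eps0 : R) (P : {poly R[i]})
  (gamma : R) (N : nat) (psi : 'I_N -> R) :
  0 < eps0 ->
  (forall x : R, in_m11 x -> cmod (((f x)%:C)%C - cpeval P x) <= eps0) ->
  (forall x : R, in_m11 x -> `|f x| <= gamma) ->
  (exists2 x0 : R, in_m11 x0 & `|f x0| = gamma) ->
  eps0 <= gamma ->
  \sum_(j < N) psi j ^+ 2 = 1 ->
  0 < \sum_(j < N) `|f (psi j)| ^+ 2 ->
  let NN := Num.sqrt (\sum_(j < N) `|f (psi j)| ^+ 2) in
  let NN1 := Num.sqrt (\sum_(j < N) cmod (cpeval P (psi j)) ^+ 2) in
  [/\ forall x : R, in_m11 x -> cmod (cpeval P x) <= 2 * gamma,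
      `|NN - NN1| <= 3 * gamma * eps0 * N%:R / NN
    & eps0 <= NN ^+ 2 / (6 * gamma * N%:R) -> NN1 >= NN / 2].
Proof.
move=> he0 hP hf _ heg hpsi hS NN NN1.
have key : forall x, in_m11 x ->
    `| `|f x| - cmod (cpeval P x) | <= eps0 /\ cmod (cpeval P x) <= 2 * gamma
    /\ `|f x| <= gamma.
  move=> x hx; have := cmod_dist ((f x)%:C)%C (cpeval P x).
  rewrite cmod_real => hd.
  have hd' := le_trans hd (hP x hx).
  have hfx := hf x hx.
  split=> //; split=> //.
  move: hd'; rewrite ler_norml => /andP[h _]; lra.
have hpsi1 : forall j, in_m11 (psi j).
  move=> j; have : psi j ^+ 2 <= 1.
    rewrite -hpsi (bigD1 j) //= lerDl; apply: sumr_ge0 => i _; exact: sqr_ge0.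
  rewrite /in_m11 => h; apply/andP; split; nra.
have hdiff : `|\sum_(j < N) `|f (psi j)| ^+ 2 - \sum_(j < N) cmod (cpeval P (psi j)) ^+ 2|
    <= 3 * gamma * eps0 * N%:R.
  rewrite -sumrB.
  apply: le_trans (ler_norm_sum _ _ _) _.
  apply: (@le_trans _ _ (\sum_(j < N) (3 * gamma * eps0))).
    apply: ler_sum => j _; case: (key _ (hpsi1 j)) => h1 [h2 h3].
    have ha : 0 <= `|f (psi j)| by [].
    have hb := cmod_ge0 (cpeval P (psi j)).
    move: h1 h2 h3 ha hb.
    set a := `|f (psi j)|; set b := cmod _ => h1 h2 h3 ha hb.
    move: h1; rewrite !ler_norml => /andP[h4 h5]; apply/andP; split; nra.
  by rewrite sumr_const card_ord mulr_natr.
have hS1 : 0 <= \sum_(j < N) cmod (cpeval P (psi j)) ^+ 2.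
  by apply: sumr_ge0 => i _; exact: sqr_ge0.
have hNN : NN ^+ 2 = \sum_(j < N) `|f (psi j)| ^+ 2 by rewrite sqr_sqrtr // ltW.
have hNN1 : NN1 ^+ 2 = \sum_(j < N) cmod (cpeval P (psi j)) ^+ 2 by rewrite sqr_sqrtr.
have hNNp : 0 < NN by rewrite sqrtr_gt0.
have hNN1p : 0 <= NN1 by rewrite sqrtr_ge0.
move: hdiff; rewrite -hNN -hNN1 subr_sqr normrM (ger0_norm (x := NN + NN1)); last lra.
move: hNN hNN1 hNNp hNN1p; clearbody NN NN1 => _ _ hNNp hNN1p hd.
have hdn : 0 <= `|NN - NN1| by [].
move: hdn hd; set d := `|NN - NN1| => hdn hd.
have hmain : d * NN <= 3 * gamma * eps0 * N%:R by nra.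
have hN : (0 < N)%N.
  case: (posnP N) => // N0; exfalso; move: hS.
  by rewrite big1 ?ltxx // => j _; have := ltn_ord j; rewrite {2}N0.
have hNr : 0 < N%:R :> R by rewrite ltr0n.
have hg : 0 < gamma by lra.
split.
- by move=> x hx; case: (key x hx) => _ [].
- by rewrite ler_pdivlMr.
- rewrite ler_pdivlMr; last by rewrite !mulr_gt0.
  move=> h.
  have h2 : NN * d <= NN * (NN / 2) by nra.
  rewrite ler_pM2l // in h2.
  have := ler_norm (NN - NN1); rewrite -/d; lra.
Qed.
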